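(* For any $y\in\mathbb{R}^n$ and any $\bar y$ with $A\bar y\le b$, $$\big\langle\bar y-y,\ \mathbb{E}_{\mathbb{S}}[a_{i^*}(a_{i^*}^Ty-b_{i^*})^+]\big\rangle=\langle\bar y-y,\nabla f(y)\rangle\le-2f(y)\le-\mu_1d(y,P)^2,$$ where $i^*$ is selected at the point $y$.
   Context: Let $A\in\mathbb{R}^{m\times n}$ have rows $a_1^T,\dots,a_m^T$ with $\|a_i\|_2=1$, and $b\in\mathbb{R}^m$; assume $Ax\le b$ is consistent and let $P=\{x:Ax\le b\}$, $\mathcal{P}(x)$ the Euclidean projection onto $P$, $d(x,P)=\|x-\mathcal{P}(x)\|$, $t^+=\max\{t,0\}$. Fix an integer $1\le\beta\le m$. Sampling distribution $\mathbb{S}$ at $y$: $\tau\subseteq\{1,\dots,m\}$ with $|\tau|=\beta$ uniformly at random, and $i^*\in\tau$ maximizing $(a_i^Ty-b_i)^+$ over $\tau$; $\mathbb{E}_{\mathbb{S}}$ is expectation over $\tau$. $f(y)=\mathbb{E}_{\mathbb{S}}[\frac12|(a_{i^*}^Ty-b_{i^*})^+|^2]$ and $\nabla f(y):=\mathbb{E}_{\mathbb{S}}[(a_{i^*}^Ty-b_{i^*})^+a_{i^*}]$. $L>0$ is a Hoffman constant ($d(x,P)^2\le L^2\|(Ax-b)^+\|^2$ for all $x$); $\mu_1=\frac1{mL^2}$. *)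

(* Defs.v *)
From HB Require Import structures.
From mathcomp Require Import all_boot all_order all_algebra.
From mathcomp Require Import classical_sets reals.
Set Implicit Arguments. Unset Strict Implicit. Unset Printing Implicit Defensive.
Import Order.TTheory GRing.Theory Num.Theory.
Local Open Scope ring_scope.
Local Open Scope classical_set_scope.

(* vectors of R^n are functions 'I_n -> R; A is an m x n matrix, row i = a_i *)
Definition dot (R : realType) (n : nat) (u v : 'I_n -> R) : R :=
  \sum_(j < n) u j * v j.

Definition enorm (R : realType) (n : nat) (u : 'I_n -> R) : R :=
  Num.sqrt (dot u u).

Definition pos (R : realType) (t : R) : R := Num.max t 0.

Definition resid (R : realType) (m n : nat) (A : 'M[R]_(m, n)) (b : 'I_m -> R)
  (y : 'I_n -> R) (i : 'I_m) : R := \sum_(j < n) A i j * y j - b i.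

Definition feasible (R : realType) (m n : nat) (A : 'M[R]_(m, n)) (b : 'I_m -> R)
  (x : 'I_n -> R) : Prop := forall i, resid A b x i <= 0.

Definition dist (R : realType) (m n : nat) (A : 'M[R]_(m, n)) (b : 'I_m -> R)
  (x : 'I_n -> R) : R :=
  inf [set r : R | exists z, feasible A b z /\ r = enorm (fun j => x j - z j)].

(* E_S over tau uniformly distributed among subsets of {1..m} of size beta *)
Definition Esamp (R : realType) (m beta : nat) (g : {set 'I_m} -> R) : R :=
  (\sum_(tau : {set 'I_m} | #|tau| == beta) g tau)
    / (#|[set tau : {set 'I_m} | #|tau| == beta]|)%:R.

(* sel tau = i^* : an element of tau maximizing (a_i^T y - b_i)^+ over tau *)
Definition is_sel (R : realType) (m n : nat) (A : 'M[R]_(m, n)) (b : 'I_m -> R)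
  (beta : nat) (y : 'I_n -> R) (sel : {set 'I_m} -> 'I_m) : Prop :=
  forall tau : {set 'I_m}, #|tau| = beta ->
    sel tau \in tau /\
    (forall i, i \in tau -> pos (resid A b y i) <= pos (resid A b y (sel tau))).

Definition fobj (R : realType) (m n : nat) (A : 'M[R]_(m, n)) (b : 'I_m -> R)
  (beta : nat) (sel : {set 'I_m} -> 'I_m) (y : 'I_n -> R) : R :=
  Esamp beta (fun tau => (pos (resid A b y (sel tau))) ^+ 2 / 2).

Definition gradf (R : realType) (m n : nat) (A : 'M[R]_(m, n)) (b : 'I_m -> R)
  (beta : nat) (sel : {set 'I_m} -> 'I_m) (y : 'I_n -> R) : 'I_n -> R :=
  fun j => Esamp beta (fun tau => pos (resid A b y (sel tau)) * A (sel tau) j).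

(* Main.v *)
Require Import Defs.
From HB Require Import structures.
From mathcomp Require Import all_boot all_order all_algebra.
From mathcomp Require Import all_fingroup.
From mathcomp Require Import classical_sets reals.
From mathcomp Require Import ring lra.
Import Order.TTheory GRing.Theory Num.Theory.
Local Open Scope ring_scope.

Lemma pos_ge0 (R : realType) (t : R) : 0 <= pos t.
Proof. rewrite /pos; case: ler0P => // /ltW //. Qed.

Lemma pos_key (R : realType) (r s : R) : s <= 0 ->
  pos r * (s - r) <= - (pos r ^+ 2).
Proof.
move=> hs; rewrite /pos; case: ler0P => hr.
  by rewrite mul0r expr2 mulr0 oppr0.
rewrite expr2; nra.
Qed.

Theorem lemma8 (R : realType) (m n : nat) (A : 'M[R]_(m, n)) (b : 'I_m -> R)
  (beta : nat) (L : R)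
  (hrows : forall i : 'I_m, enorm (fun j => A i j) = 1)
  (hcons : exists x, feasible A b x)
  (hbeta : (1 <= beta <= m)%N)
  (hL : 0 < L)
  (hHoff : forall x : 'I_n -> R,
     dist A b x ^+ 2 <= L ^+ 2 * \sum_(i < m) (pos (resid A b x i)) ^+ 2)
  (y ybar : 'I_n -> R) (sel : {set 'I_m} -> 'I_m)
  (hsel : is_sel A b beta y sel)
  (hybar : feasible A b ybar) :
  let mu1 := 1 / (m%:R * L ^+ 2) in
  let d := fun j => ybar j - y j in
  dot d (fun j => Esamp beta
           (fun tau => A (sel tau) j * pos (resid A b y (sel tau))))
    = dot d (gradf A b beta sel y)
  /\ dot d (gradf A b beta sel y) <= - 2 * fobj A b beta sel y
  /\ - 2 * fobj A b beta sel y <= - mu1 * dist A b y ^+ 2.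
Proof.
move=> mu1 d.
set Cn := #|[set tau : {set 'I_m} | #|tau| == beta]%classic|.
have hC : Cn = 'C(m, beta).
  rewrite /Cn -[in RHS](card_ord m) -card_draws; apply: eq_card => tau.
  rewrite !inE /=; apply/idP/idP => [/set_mem //|h]; exact: mem_set.
have Cpos : (0 < Cn)%N by rewrite hC bin_gt0; case/andP: hbeta.
have C0 : 0 <= (Cn%:R : R)^-1 by rewrite invr_ge0 ler0n.
split.
  rewrite /dot /gradf /Esamp -/Cn; apply: eq_bigr => j _; congr (_ * (_ / _)).
  by apply: eq_bigr => tau _; rewrite mulrC.
split.
  rewrite /dot /gradf /fobj /Esamp -/Cn.
  have -> : forall F : {set 'I_m} -> 'I_n -> R,
      \sum_(j < n) d j * ((\sum_(tau : {set 'I_m} | #|tau| == beta) F tau j) / Cn%:R)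
      = (\sum_(tau : {set 'I_m} | #|tau| == beta) \sum_(j < n) F tau j * d j) / Cn%:R.
    move=> F; rewrite (exchange_big _ _ _ _ _ (fun tau j => F tau j * d j)) /= mulr_suml.
    apply: eq_bigr => j _; rewrite mulrA mulr_sumr; congr (_ * _).
    by apply: eq_bigr => tau _; rewrite mulrC.
  rewrite mulrA [leRHS]mulrC [_ / _]mulrC; apply: ler_wpM2l => //.
  rewrite mulr_sumr; apply: ler_sum => tau _.
  under eq_bigr => j _ do rewrite -mulrA.
  rewrite -mulr_sumr.
  have -> : \sum_(j < n) A (sel tau) j * d j
      = resid A b ybar (sel tau) - resid A b y (sel tau).
    rewrite /resid /d opprB addrA subrK -sumrB; apply: eq_bigr => j _.
    by rewrite mulrBr.
  have := @pos_key R (resid A b y (sel tau)) _ (hybar (sel tau)).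
  move=> h; apply: (le_trans h); lra.
set g := fun i => pos (resid A b y i) ^+ 2.
have g0 : forall i, 0 <= g i by move=> i; rewrite /g expr2 mulr_ge0 // pos_ge0.
set S := \sum_(i < m) g i.
have S0 : 0 <= S by apply: sumr_ge0 => i _.
set sumM := \sum_(tau : {set 'I_m} | #|tau| == beta) g (sel tau).
set Nr := fun i : 'I_m => \sum_(tau : {set 'I_m} | #|tau| == beta) ((i \in tau)%:R : R).
have hN : forall i j, Nr i = Nr j.
  move=> i j; rewrite /Nr (reindex_inj (imset_inj (@perm_inj _ (tperm i j)))) /=.
  apply: eq_big => tau.
    by rewrite card_imset //; exact: perm_inj.
  by move=> _; rewrite -{1}(tpermR i j) mem_imset //; exact: perm_inj.
have cardP : #|[pred tau : {set 'I_m} | #|tau| == beta]| = Cn.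
  rewrite /Cn; apply: eq_card => tau; rewrite !inE /=.
  apply/idP/idP => [h|/set_mem //]; exact: mem_set.
have ind : forall (tau : {set 'I_m}) (G : 'I_m -> R),
    \sum_i G i * (i \in tau)%:R = \sum_(i in tau) G i.
  move=> tau G; rewrite [RHS]big_mkcond; apply: eq_bigr => i _.
  by case: (i \in tau); rewrite ?mulr1 ?mulr0.
have hsumN : \sum_i Nr i = beta%:R * Cn%:R.
  rewrite /Nr exchange_big /=.
  rewrite (eq_bigr (fun _ => beta%:R)); last first.
    move=> tau /eqP h; rewrite -h.
    under eq_bigr => i _ do rewrite -[(_ \in _)%:R]mul1r.
    by rewrite ind sumr_const.
  by rewrite sumr_const cardP mulr_natr.
have mpos : (0 < m)%N by case/andP: hbeta => h1 h2; exact: leq_trans h1 h2.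
set i0 := Ordinal mpos.
set N0 := Nr i0.
have hmN : m%:R * N0 = beta%:R * Cn%:R.
  rewrite -hsumN (eq_bigr (fun _ => N0)); last by move=> i _; rewrite /N0 (hN i i0).
  by rewrite sumr_const card_ord mulr_natl.
have hM : S * N0 <= beta%:R * sumM.
  have -> : S * N0 = \sum_(tau : {set 'I_m} | #|tau| == beta) \sum_i g i * (i \in tau)%:R.
    rewrite exchange_big /S mulr_suml; apply: eq_bigr => i _.
    by rewrite -mulr_sumr /N0 (hN i0 i).
  rewrite /sumM mulr_sumr; apply: ler_sum => tau /eqP htau.
  rewrite ind (_ : beta%:R * _ = \sum_(i in tau) g (sel tau)); last by rewrite sumr_const htau mulr_natl.
  apply: ler_sum => i hi.
  have [_ hs] := hsel tau htau.
  rewrite /g !expr2; apply: ler_pM; rewrite ?pos_ge0 //; exact: hs.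
have hD := hHoff y.
have hf : fobj A b beta sel y = sumM / 2 / Cn%:R.
  by rewrite /fobj /Esamp -/Cn -mulr_suml.
rewrite hf /mu1.
have Cp : 0 < (Cn%:R : R) by rewrite ltr0n.
have mp : 0 < (m%:R : R) by rewrite ltr0n.
have bp : 0 < (beta%:R : R) by rewrite ltr0n; case/andP: hbeta.
have L2 : 0 < L ^+ 2 by rewrite exprn_gt0.
have h1 : S * Cn%:R <= m%:R * sumM.
  rewrite -(ler_pM2l bp) mulrCA -hmN; nra.
set D := dist A b y ^+ 2 in hD *.
have h2 : D * Cn%:R <= L ^+ 2 * (m%:R * sumM).
  apply: (le_trans (y := L ^+ 2 * S * Cn%:R)); first by rewrite ler_pM2r.
  by rewrite -mulrA ler_pM2l.
suff : D / (m%:R * L ^+ 2) <= sumM / Cn%:R.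
  move=> h; have -> : -2 * (sumM / 2 / Cn%:R) = - (sumM / Cn%:R).
    by rewrite mulNr mulrAC -mulrA [2 * _]mulrC mulrA divfK ?pnatr_eq0.
  by rewrite mulNr lerN2 mul1r mulrC.
rewrite ler_pdivlMr // mulrAC ler_pdivrMr ?mulr_gt0 //.
apply: (le_trans h2); rewrite le_eqVlt; apply/orP; left; apply/eqP; ring.
Qed.
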